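(* Let $X$ be a digraph and $\Delta$ the largest vertex degree of $\Gamma(X)$. Then $\rho(H_k(X))\le\Delta$ for all $k\in\mathbb{N}$. Furthermore, if $X$ is weakly connected, then $\rho(H_k(X))=\Delta$ if and only if $\Gamma(X)$ is $\Delta$-regular and, with $\theta=\frac{\pi}{k+1}$, there is a partition of $V(X)$ into $2k+2$ (possibly empty) parts $V_0,V_\theta,V_{2\theta},\dots,V_{(2k+1)\theta}$ (subscripts read modulo $2\pi$) such that $X$ has one of the following structures: (A) For each $m\in\{0,1,\dots,2k+1\}$ the digraph induced by $V_{m\theta}$ contains only digons, and for each directed edge $\overrightarrow{e_{st}}$ of $X$ (not part of a digon), if $v_s\in V_{p\theta}$ for some $p\in\{0,\dots,2k+1\}$ then $v_t\in V_{(p+1)\theta\ (\mathrm{mod}\ 2\pi)}$. (B) For every digon $\{v_s,v_t\}$ of $X$, if $v_s\in V_{m\theta}$ then $v_t\in V_{(\pi+m\theta)\ (\mathrm{mod}\ 2\pi)}$ (in particular each $V_{m\theta}$ is an independent set), and for every directed edge $\overrightarrow{e_{st}}$ of $X$ (not part of a digon), if $v_s\in V_{m\theta}$ then $v_t\in V_{(\pi+(1+m)\theta)\ (\mathrm{mod}\ 2\pi)}$.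
   Context: A digraph $X$ has vertex set $\{v_1,\dots,v_n\}$ and a set of directed edges $\overrightarrow{e_{st}}$ (no loops); a pair $\{v_s,v_t\}$ with both $\overrightarrow{e_{st}}$ and $\overrightarrow{e_{ts}}$ in $X$ is a digon. The underlying graph $\Gamma(X)$ is the simple graph with $v_s\sim v_t$ iff at least one of $\overrightarrow{e_{st}},\overrightarrow{e_{ts}}$ is in $X$; $X$ is weakly connected if $\Gamma(X)$ is connected. For $k\in\mathbb{N}$, the $k$-generalized Hermitian adjacency matrix $H_k(X)$ has $(s,t)$ entry $1$ if both $\overrightarrow{e_{st}},\overrightarrow{e_{ts}}\in E(X)$; $e^{i\pi/(k+1)}$ if $\overrightarrow{e_{st}}\in E(X)$ and $\overrightarrow{e_{ts}}\notin E(X)$; $e^{-i\pi/(k+1)}$ if $\overrightarrow{e_{st}}\notin E(X)$ and $\overrightarrow{e_{ts}}\in E(X)$; and $0$ otherwise. $\rho$ is the spectral radius. *)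

(* Defs.v *)
From mathcomp Require Import all_boot all_order all_algebra.
From mathcomp Require Import reals trigo.
From mathcomp Require Export complex.
Import GRing.Theory Num.Theory.

Set Implicit Arguments.
Unset Strict Implicit.
Unset Printing Implicit Defensive.

Local Open Scope ring_scope.
Local Open Scope complex_scope.

(** A digraph on the vertex set 'I_n = {v_0,...,v_(n-1)} is given by its
    arc relation E : rel 'I_n ; E s t means the directed edge e_st is in X.
    "No loops" is the hypothesis [irreflexive E]. *)

Definition und_adj (n : nat) (E : rel 'I_n) : rel 'I_n :=
  fun s t => (s != t) && (E s t || E t s).

Definition und_deg (n : nat) (E : rel 'I_n) (s : 'I_n) : nat :=
  #|[set t | und_adj E s t]|.

Definition max_deg (n : nat) (E : rel 'I_n) : nat :=
  (\max_(s : 'I_n) und_deg E s)%N.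

Definition weakly_connected (n : nat) (E : rel 'I_n) : Prop :=
  forall s t : 'I_n, connect (und_adj E) s t.

Definition und_regular (n : nat) (E : rel 'I_n) (d : nat) : Prop :=
  forall s : 'I_n, und_deg E s = d.

Definition expi (R : realType) (x : R) : R[i] := cos x +i* sin x.

Definition Hk (R : realType) (k n : nat) (E : rel 'I_n) : 'M[R[i]]_n :=
  \matrix_(s < n, t < n)
    if E s t && E t s then 1
    else if E s t then expi (pi / k.+1%:R)
    else if E t s then expi (- (pi / k.+1%:R))
    else 0.

Definition spectrum (R : realType) (n : nat) (A : 'M[R[i]]_n) : seq R[i] :=
  sval (closed_field_poly_normal (char_poly A)).

(** Spectral radius: the largest modulus of an eigenvalue (0 if n = 0). *)
Definition spectral_radius (R : realType) (n : nat) (A : 'M[R[i]]_n) : R :=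
  \big[Num.max/0]_(z <- spectrum A) Normc.normc z.

(** Structure (A) for a labelling f : V -> 'I_(2k+2), where vertex v lies in
    V_{(f v) theta}, theta = pi/(k+1); indices are read modulo 2k+2
    (i.e. angles modulo 2 pi). *)
Definition structureA (k n : nat) (E : rel 'I_n) (f : 'I_n -> 'I_(2 * k.+1)) : Prop :=
  (forall s t, E s t -> E t s -> f s = f t) /\
  (forall s t, E s t -> f s = f t -> E t s) /\
  (forall s t, E s t -> ~~ E t s -> (f t : nat) = ((f s + 1) %% (2 * k.+1))%N).

(** Structure (B). Note pi = (k+1) theta. *)
Definition structureB (k n : nat) (E : rel 'I_n) (f : 'I_n -> 'I_(2 * k.+1)) : Prop :=
  (forall s t, E s t -> E t s -> (f t : nat) = ((f s + k.+1) %% (2 * k.+1))%N) /\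
  (forall s t, E s t -> ~~ E t s ->
     (f t : nat) = ((f s + k.+1 + 1) %% (2 * k.+1))%N).

Arguments Hk R k {n} E.
Arguments structureA k {n} E f.
Arguments structureB k {n} E f.

(* Main.v *)
Require Import Defs.
From mathcomp Require Import all_boot all_order all_algebra.
From mathcomp Require Import reals trigo.
From mathcomp Require Import complex.
From mathcomp Require Import ring lra.
Import Order.TTheory GRing.Theory Num.Theory.
Local Open Scope ring_scope.
Local Open Scope complex_scope.
From mathcomp Require Import zify.
Lemma dv_aux (m k : nat) : (m %| (2 * k.+1))%N -> m != (2 * k.+1)%N -> (m <= k.+1)%N.
Proof. move=> /dvdnP [q Hq] /eqP Hm. case: q Hq => [|[|q]] Hq; try lia. Qed.
Section S.
Variable R : realType.
Lemma normcC (z : R[i]) : `|z| = (Normc.normc z)%:C.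
Proof. by []. Qed.
Lemma expiD (x y : R) : expi x * expi y = expi (x + y).
Proof. rewrite /expi /= cosD sinD. congr (_ +i* _); ring. Qed.
Lemma expi0 : expi (0:R) = 1.
Proof. by rewrite /expi cos0 sin0. Qed.
Lemma norm_expi (x : R) : `|expi x| = 1.
Proof. by rewrite normc_def /= cos2Dsin2 sqrtr1. Qed.
Lemma expiX (x : R) m : expi x ^+ m = expi (x *+ m).
Proof. elim: m => [|m IH]; first by rewrite expr0 mulr0n expi0.
by rewrite exprS IH expiD mulrS. Qed.
Lemma expipi : expi (pi : R) = -1.
Proof. by rewrite /expi cospi sinpi; apply/eqP; rewrite eq_complex /= oppr0 !eqxx. Qed.
Definition om (k : nat) : R[i] := expi (pi / k.+1%:R).
Lemma omK k : om k ^+ k.+1 = -1.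
Proof.
rewrite /om expiX -[(pi / _) *+ _]mulr_natr divfK ?expipi // pnatr_eq0 //.
Qed.
Lemma omN k : (om k) ^+ (2 * k.+1) = 1.
Proof. by rewrite mulnC exprM omK expr2 mulrNN mulr1. Qed.
Lemma om_prim k : (2 * k.+1)%N.-primitive_root (om k).
Proof.
have [m pm mdv] := prim_order_exists (isT : (0 < 2 * k.+1)%N) (omN k).
have [Em|mne] := eqVneq m (2 * k.+1)%N; first by rewrite -Em.
have m0 := prim_order_gt0 pm.
have wm := prim_expr_order pm.
have := dv_aux _ _ mdv mne; rewrite leq_eqVlt => /orP [/eqP mk|mk].
  by move: wm; rewrite mk omK => /eqP; rewrite -subr_eq0 -opprD oppr_eq0 -mulr2n pnatr_eq0.
exfalso.
move: wm; rewrite /om expiX /expi => /(congr1 (fun z : R[i] => complex.Im z)) /=.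
have Hx : 0 < (pi : R) / k.+1%:R *+ m < pi.
  rewrite -[(pi / _) *+ _]mulr_natr; apply/andP; split.
    by rewrite mulr_gt0 ?ltr0n // divr_gt0 ?pi_gt0 ?ltr0n.
  rewrite -[X in _ < X](@divfK _ (k.+1%:R)) ?pnatr_eq0 //.
  by rewrite ltr_pM2l ?ltr_nat // divr_gt0 ?pi_gt0 ?ltr0n.
by move=> H; have := sin_gt0_pi Hx; rewrite H Order.POrderTheory.ltxx.
Qed.
Lemma omiK k : expi (- (pi / k.+1%:R)) * om k = 1.
Proof. by rewrite /om expiD addNr expi0. Qed.
Lemma omi_om k : expi (- (pi / k.+1%:R)) = om k ^+ (2 * k.+1).-1.
Proof.
apply: (mulIf (x := om k)). 
  by apply/eqP => h; have := omK k; rewrite h expr0n /= => /eqP; rewrite eq_sym oppr_eq0 oner_eq0.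
by rewrite omiK -exprSr prednK // omN.
Qed.

Variables (k n : nat) (E : rel 'I_n).
Hypothesis irrE : irreflexive E.
Local Notation H := (Hk R k E).
Local Notation N := (2 * k.+1)%N.
Local Notation w := (om k).

Lemma adj_sym s t : und_adj E s t = und_adj E t s.
Proof. by rewrite /und_adj eq_sym orbC. Qed.

Lemma H0 s t : ~~ und_adj E s t -> H s t = 0.
Proof.
rewrite /und_adj mxE negb_and negbK => /orP [/eqP ->|].
  by rewrite irrE.
by rewrite negb_or => /andP [/negbTE -> /negbTE ->].
Qed.

Lemma Hom s t : und_adj E s t -> exists c, H s t = w ^+ c.
Proof.
rewrite /und_adj mxE => /andP [_ h].
case: (E s t) h; case: (E t s) => //= _.
- by exists 0%N; rewrite expr0.
- by exists 1%N; rewrite expr1.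
- by exists N.-1; rewrite omi_om.
Qed.

Lemma Hnorm s t : und_adj E s t -> `|H s t| = 1.
Proof.
rewrite /und_adj mxE => /andP [_ h].
case: (E s t) h; case: (E t s) => //= _; by rewrite ?normr1 ?norm_expi.
Qed.

Lemma Hpair s t : und_adj E s t -> H s t * H t s = 1.
Proof.
rewrite /und_adj !mxE => /andP [_ h].
case: (E s t) h; case: (E t s) => //= _; rewrite ?mulr1 //.
  by rewrite mulrC omiK.
by rewrite omiK.
Qed.

Lemma sum_adj (c : R[i]) t :
  \sum_s (if und_adj E s t then c else 0) = c *+ und_deg E t.
Proof.
rewrite -big_mkcond sumr_const /und_deg; congr (_ *+ _).
by apply: eq_card => s; rewrite !inE adj_sym.
Qed.

Lemma deg_le t : (und_deg E t <= max_deg E)%N.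
Proof. rewrite /max_deg; exact: (@leq_bigmax _ (und_deg E) t). Qed.
Local Notation D := (max_deg E).

Lemma row_nz (v : 'rV[R[i]]_n) : v != 0 -> exists t0, v 0 t0 != 0.
Proof.
move=> Hv; apply/existsP; apply: contraNT Hv => /existsPn H1.
by apply/eqP/matrixP => i j; rewrite ord1 mxE; apply/eqP; rewrite -[_ == _]negbK H1.
Qed.

Lemma max_entry (v : 'rV[R[i]]_n) : v != 0 ->
  exists t, 0 < `|v 0 t| /\ forall s, `|v 0 s| <= `|v 0 t|.
Proof.
move=> /row_nz [t0 Ht0].
case: (@arg_maxP _ _ _ t0 xpredT (fun s => Normc.normc (v 0 s)) isT) => t _ Ht.
have Hs : forall s, `|v 0 s| <= `|v 0 t| by move=> s; rewrite !normcC lecR; exact: Ht.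
exists t; split => //; apply: lt_le_trans (Hs t0); by rewrite normr_gt0.
Qed.

Lemma eig_entry (v : 'rV[R[i]]_n) a t : v *m H = a *: v ->
  a * v 0 t = \sum_s v 0 s * H s t.
Proof. by move/(congr1 (fun M : 'rV[R[i]]_n => M 0 t)); rewrite !mxE => <-. Qed.

Lemma eig_bound (v : 'rV[R[i]]_n) a : v *m H = a *: v -> v != 0 -> `|a| <= D%:R.
Proof.
move=> Hva /max_entry [t [Mt Hs]].
have : `|a| * `|v 0 t| <= D%:R * `|v 0 t|.
  rewrite -normrM eig_entry //.
  apply: le_trans (ler_norm_sum _ _ _) _.
  apply: (@le_trans _ _ (\sum_s (if und_adj E s t then `|v 0 t| else 0))).
    apply: ler_sum => s _; case: ifPn => h.
      by rewrite normrM Hnorm // mulr1.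
    by rewrite H0 // mulr0 normr0.
  rewrite sum_adj -[`|v 0 t| *+ _]mulr_natr [_ * `|v 0 t|]mulrC ler_pM2l //.
  by rewrite ler_nat deg_le.
by rewrite ler_pM2r.
Qed.
Lemma spec_root (A : 'M[R[i]]_n) z : (z \in spectrum A) = root (char_poly A) z.
Proof.
rewrite /spectrum; case: closed_field_poly_normal => r /= Hr.
by rewrite Hr (monicP (char_poly_monic A)) scale1r root_prod_XsubC.
Qed.

Lemma spec_eig z : z \in spectrum H -> exists2 v : 'rV_n, v *m H = z *: v & v != 0.
Proof. by rewrite spec_root -eigenvalue_root_char => /eigenvalueP. Qed.

Lemma eig_spec z (v : 'rV_n) : v *m H = z *: v -> v != 0 -> z \in spectrum H.
Proof. by move=> h1 h2; rewrite spec_root -eigenvalue_root_char; apply/eigenvalueP; exists v. Qed.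

Lemma natC (m : nat) : (m%:R : R[i]) = (m%:R : R)%:C.
Proof. by rewrite rmorph_nat. Qed.

Lemma rho_le : spectral_radius H <= D%:R.
Proof.
rewrite /spectral_radius big_seq; apply: bigmax_le => // z /spec_eig [v h1 h2].
by rewrite -lecR -normcC -natC (eig_bound _ _ h1 h2).
Qed.

Lemma rho_ge z (v : 'rV_n) : v *m H = z *: v -> v != 0 -> Normc.normc z <= spectral_radius H.
Proof.
move=> h1 h2; rewrite /spectral_radius.
apply: (@le_bigmax_seq _ _ _ _ 0 z xpredT (fun z => Normc.normc z) (eig_spec _ _ h1 h2)) => //.
Qed.

Lemma rho_attained : 0 < spectral_radius H -> exists2 z, z \in spectrum H & Normc.normc z = spectral_radius H.
Proof.
rewrite /spectral_radius; elim: (spectrum H) => [|z r IH]; first by rewrite big_nil ltxx.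
rewrite big_cons /Num.max; case: ifPn => _ h.
  by have [y yr <-] := IH h; exists y => //; rewrite inE yr orbT.
by exists z => //; rewrite inE eqxx.
Qed.
Lemma eig_eq (v : 'rV_n) a t : v *m H = a *: v -> (forall s, `|v 0 s| <= `|v 0 t|) ->
  0 < `|v 0 t| -> `|a| = D%:R -> (0 < D)%N ->
  und_deg E t = D /\ forall s, und_adj E s t -> v 0 s * H s t = a / D%:R * v 0 t.
Proof.
move=> Hva Hs Mt Ha D0.
have Dnz : (D%:R : R[i]) != 0 by rewrite pnatr_eq0 -lt0n.
have anz : a != 0 by rewrite -normr_eq0 Ha.
have vnz : v 0 t != 0 by rewrite -normr_gt0.
set u := a / D%:R.
have Hu : `|u| = 1 by rewrite normrM normfV Ha normr_nat divff.
have unz : u * v 0 t != 0 by rewrite mulf_neq0 // -normr_eq0 Hu oner_eq0.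
pose F := fun s => v 0 s * H s t / (u * v 0 t).
pose G := fun s => if und_adj E s t then (1 : R[i]) else 0.
have SF : \sum_s F s = D%:R.
  rewrite /F -mulr_suml -(eig_entry _ _ _ Hva) /u. apply: (canLR (mulfK unz)); by rewrite mulrA [D%:R * _]mulrC divfK.
have FG : forall s, xpredT s -> `|F s| <= G s.
  move=> s _; rewrite /F /G; case: ifPn => h.
    rewrite normrM normfV normrM Hnorm // mulr1 normrM Hu mul1r ler_pdivrMr // mul1r.
    exact: Hs.
  by rewrite H0 // mulr0 mul0r normr0.
have SG : \sum_s G s = (und_deg E t)%:R by rewrite /G sum_adj.
have deg : und_deg E t = D.
  apply/eqP; rewrite eqn_leq deg_le /= -(@ler_nat R[i]) -SG -(normr_nat _ D) -SF.
  apply: le_trans (ler_norm_sum _ _ _) _; apply: ler_sum => s _; exact: FG.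
split => // s h.
have EFG := @normC_sum_upper _ _ xpredT F G FG.
have Esum : \sum_(i | xpredT i) F i = \sum_(i | xpredT i) G i by rewrite SF SG deg.
have := EFG Esum s isT; rewrite /F /G h => Fs.
by rewrite -[LHS](divfK unz) Fs mul1r.
Qed.
Lemma H11 s t : E s t -> E t s -> H s t = 1.
Proof. by move=> h1 h2; rewrite mxE h1 h2. Qed.
Lemma H10 s t : E s t -> ~~ E t s -> H s t = w.
Proof. by move=> h1 h2; rewrite mxE h1 (negbTE h2). Qed.
Lemma H01 s t : ~~ E s t -> E t s -> H s t = w ^+ N.-1.
Proof. by move=> h1 h2; rewrite mxE h2 (negbTE h1) omi_om. Qed.
Lemma adjE s t : E s t -> und_adj E s t.
Proof. by move=> h; rewrite /und_adj h orTb andbT; apply: contraTneq h => ->; rewrite irrE. Qed.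
Arguments adjE {s t}.

Lemma weq a b : w ^+ a = w ^+ b -> a = b %[mod N].
Proof. by move/eqP; rewrite (eq_prim_root_expr (om_prim k)) => /eqP. Qed.
Lemma ordmod (i : 'I_N) : (i : nat) = (i %% N)%N.
Proof. by rewrite modn_small. Qed.
Lemma wmod a : w ^+ (a %% N)%N = w ^+ a.
Proof. exact: (prim_expr_mod (om_prim k)). Qed.
Lemma wnz : w != 0.
Proof. by rewrite -normr_eq0 /om norm_expi oner_eq0. Qed.
Lemma wXnz a : w ^+ a != 0.
Proof. by rewrite expf_neq0 // wnz. Qed.

Lemma strA (f : 'I_n -> 'I_N) :
  (forall s t, und_adj E s t -> w ^+ f s * H s t = w ^+ f t) -> structureA k E f.
Proof.
move=> rel; split; [|split].
- move=> s t h1 h2; have := rel s t (adjE h1); rewrite H11 // mulr1 => /weq.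
  by rewrite -!ordmod => /val_inj.
- move=> s t h1 fst; apply/negPn/negP => h2.
  have := rel s t (adjE h1); rewrite H10 // -fst -[X in _ = X]mulr1 => /(mulfI (wXnz _)).
  have N1 : (1 < N)%N by lia.
  by move/eqP; rewrite -(expr1 w) -[X in _ == X](expr0 w) (eq_prim_root_expr (om_prim k)) mod0n modn_small.
- move=> s t h1 h2; have := rel s t (adjE h1); rewrite H10 // -exprSr => /weq.
  by rewrite -ordmod addn1 => <-.
Qed.

Lemma strB (f : 'I_n -> 'I_N) :
  (forall s t, und_adj E s t -> w ^+ f s * H s t = - w ^+ f t) -> structureB k E f.
Proof.
move=> rel; split.
- move=> s t h1 h2; have := rel s t (adjE h1); rewrite H11 // mulr1 => h.
  have : w ^+ f t = w ^+ (f s + k.+1) by rewrite exprD omK h mulrN mulr1 opprK.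
  by move/weq; rewrite -ordmod.
- move=> s t h1 h2; have := rel s t (adjE h1); rewrite H10 // => h.
  have : w ^+ f t = w ^+ (f s + k.+1 + 1).
    by rewrite !exprD omK expr1 mulrN1 mulNr h opprK.
  by move/weq; rewrite -ordmod.
Qed.
Lemma strA_conv (f : 'I_n -> 'I_N) : structureA k E f ->
  forall s t, und_adj E s t -> w ^+ f s * H s t = w ^+ f t.
Proof.
case=> [A1 [A2 A3]] s t; rewrite /und_adj => /andP [_ h].
case Est: (E s t) h; case Ets: (E t s) => // _.
- by rewrite H11 // mulr1 (A1 s t Est Ets).
- by rewrite H10 ?Ets // (A3 s t Est) ?Ets // wmod addn1 exprSr.
- rewrite H01 ?Est // (A3 t s Ets) ?Est // wmod -exprD addn1 addSn -addnS prednK //.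
  by rewrite exprD omN mulr1.
Qed.

Lemma strB_conv (f : 'I_n -> 'I_N) : structureB k E f ->
  forall s t, und_adj E s t -> w ^+ f s * H s t = - w ^+ f t.
Proof.
case=> [B1 B2] s t; rewrite /und_adj => /andP [_ h].
case Est: (E s t) h; case Ets: (E t s) => // _.
- by rewrite H11 // mulr1 (B1 s t Est Ets) wmod exprD omK mulrN1 opprK.
- by rewrite H10 ?Ets // (B2 s t Est) ?Ets // wmod !exprD omK expr1 mulrN1 mulNr opprK.
- rewrite H01 ?Est // (B2 t s Ets) ?Est // wmod (exprD w (f t + k.+1) 1) (exprD w (f t) k.+1) omK expr1 -mulrA -exprS prednK //.
  by rewrite omN mulr1 mulrN1.
Qed.
Lemma fwd : weakly_connected E -> spectral_radius H = D%:R ->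
  und_regular E D /\ exists f : 'I_n -> 'I_N, structureA k E f \/ structureB k E f.
Proof.
move=> wc rho.
have N0 : (0 < N)%N by [].
have [D0|Dpos] := posnP D.
  have noE : forall s t, E s t -> False.
    move=> s t h; have := deg_le s; rewrite D0 leqn0 /und_deg cards_eq0 => /eqP/setP/(_ t).
    by rewrite !inE (adjE h).
  split; first by move=> s; have := deg_le s; rewrite D0 leqn0 => /eqP.
  exists (fun _ => Ordinal N0); left; split; [|split] => s t h; exfalso; exact: noE h.
have [z zin zD] := rho_attained (ltac:(by rewrite rho ltr0n)).
have [v Hv vnz] := spec_eig z zin.
have za : `|z| = D%:R by rewrite normcC zD rho natC.
have [t0 [Mt Hs]] := max_entry _ vnz.
set M := `|v 0 t0|.
set u := z / D%:R.
have key : forall t, `|v 0 t| = M ->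
    und_deg E t = D /\ forall s, und_adj E s t -> v 0 s * H s t = u * v 0 t.
  move=> t ht; apply: (eig_eq _ _ _ Hv) => //; last by rewrite ht.
  by move=> s; rewrite ht; exact: Hs.
have Dnz : (D%:R : R[i]) != 0 by rewrite pnatr_eq0 -lt0n.
have Hu : `|u| = 1 by rewrite normrM normfV za normr_nat divff.
have step : forall s t, und_adj E s t -> `|v 0 t| = M -> `|v 0 s| = M.
  move=> s t h ht; have [_ r] := key t ht; have := r s h.
  by move/(congr1 (fun x : R[i] => `|x|)); rewrite normrM Hnorm // mulr1 normrM Hu mul1r ht.
have allM : forall s, `|v 0 s| = M.
  have clA : closed (und_adj E) [pred s | `|v 0 s| == M].
    move=> x y hxy; rewrite !inE; apply/eqP/eqP => h.
      by apply: (step y x) => //; rewrite adj_sym.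
    exact: (step x y).
  move=> s; have := closed_connect clA (wc t0 s); rewrite !inE eqxx => /esym/eqP //.
have reg : und_regular E D by move=> s; have [] := key s (allM s).
have rel : forall s t, und_adj E s t -> v 0 s * H s t = u * v 0 t.
  by move=> s t h; have [_ r] := key t (allM t); exact: r.
have vnz' : forall s, v 0 s != 0 by move=> s; rewrite -normr_gt0 allM.
have [s1 hs1] : exists s1, und_adj E t0 s1.
  have : (0 < und_deg E t0)%N by rewrite (proj1 (key t0 erefl)).
  by rewrite /und_deg card_gt0 => /set0Pn [s1]; rewrite inE => h; exists s1.
have u2 : u ^+ 2 = 1.
  have h1 := rel t0 s1 hs1.
  have h2 := rel s1 t0 (ltac:(by rewrite adj_sym)).
  apply: (mulIf (mulf_neq0 (vnz' t0) (vnz' s1))); rewrite mul1r.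
  rewrite -[X in _ = X]mulr1 -(Hpair t0 s1 hs1).
  rewrite [RHS](_ : _ = (v 0 t0 * H t0 s1) * (v 0 s1 * H s1 t0)); last by ring.
  rewrite h1 h2; ring.
have uu : u * u = 1 by rewrite -expr2.
have uor : u = 1 \/ u = -1.
  by move/eqP: u2; rewrite sqrf_eq1 => /orP [/eqP|/eqP]; [left|right].
have cl : forall s t, und_adj E s t -> exists c, v 0 t = v 0 s * w ^+ c.
  move=> s t h; have [c Hc] := Hom s t h.
  have [cu Hcu] : exists cu, u = w ^+ cu.
    by case: uor => ->; [exists 0%N; rewrite expr0 | exists k.+1; rewrite omK].
  exists (cu + c)%N.
  have : u * (v 0 s * H s t) = u * (u * v 0 t) by rewrite rel.
  by rewrite [u * (u * _)]mulrA uu mul1r => <-; rewrite Hc Hcu mulrCA exprD.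
have B : forall s, exists m : 'I_N, v 0 s == v 0 t0 * w ^+ m.
  have stepB : forall s t, und_adj E s t ->
      [exists m : 'I_N, v 0 s == v 0 t0 * w ^+ m] -> [exists m : 'I_N, v 0 t == v 0 t0 * w ^+ m].
    move=> s t h /existsP [m /eqP hm]; have [c hc] := cl s t h.
    apply/existsP; exists (Ordinal (ltn_pmod (m + c) N0)).
    by rewrite hc hm /= wmod exprD mulrA.
  have clB : closed (und_adj E) [pred s | [exists m : 'I_N, v 0 s == v 0 t0 * w ^+ m]].
    move=> x y h; rewrite !inE; apply/idP/idP; first exact: stepB.
    by apply: stepB; rewrite adj_sym.
  move=> s; apply/existsP.
  have := closed_connect clB (wc t0 s); rewrite !inE => <-.
  by apply/existsP; exists (Ordinal N0); rewrite expr0 mulr1.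
pose f := fun s => odflt (Ordinal N0) [pick m : 'I_N | v 0 s == v 0 t0 * w ^+ m].
have Hf : forall s, v 0 s = v 0 t0 * w ^+ f s.
  move=> s; rewrite /f; case: pickP => [m /eqP //|none].
  by have [m hm] := B s; rewrite none in hm.
have relw : forall s t, und_adj E s t -> w ^+ f s * H s t = u * w ^+ f t.
  move=> s t h; have := rel s t h; rewrite (Hf s) (Hf t) -mulrA [u * _]mulrCA.
  exact: (mulfI (vnz' t0)).
split => //; exists f.
case: uor => [u1|un1].
  by left; apply: strA => s t h; rewrite relw // u1 mul1r.
by right; apply: strB => s t h; rewrite relw // un1 mulN1r.
Qed.
Lemma bwd : und_regular E D -> (exists f : 'I_n -> 'I_N, structureA k E f \/ structureB k E f) ->
  spectral_radius H = D%:R.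
Proof.
move=> reg [f hf].
apply: le_anti; rewrite rho_le /=.
have [u [rel u1]] : exists u : R[i],
    (forall s t, und_adj E s t -> w ^+ f s * H s t = u * w ^+ f t) /\ `|u| = 1.
  case: hf => h; [exists 1 | exists (-1)]; split; rewrite ?normrN ?normr1 //;
    move=> s t a; rewrite ?mul1r ?mulN1r; [exact: strA_conv | exact: strB_conv].
case: (pickP (fun _ : 'I_n => true)) => [s0 _|none].
  pose v := \row_s w ^+ f s.
  have vnz : v != 0.
    by apply/eqP => /matrixP /(_ 0 s0); rewrite !mxE; apply/eqP; exact: wXnz.
  have Hv : v *m H = (u * D%:R) *: v.
    apply/matrixP => i j; rewrite !mxE.
    rewrite (eq_bigr (fun s => if und_adj E s j then u * w ^+ f j else 0)).
      by rewrite sum_adj reg -[(u * _) *+ _]mulr_natr mulrAC.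
    move=> s _; rewrite mxE; case: ifPn => h; [exact: rel | by rewrite H0 // mulr0].
  have := rho_ge _ _ Hv vnz.
  have -> // : Normc.normc (u * D%:R) = D%:R.
  by apply: complexI; rewrite -normcC normrM u1 mul1r normr_nat natC.
have -> : D = 0%N.
  by rewrite /max_deg big_pred0 // => s; exact: none s.
by rewrite /spectral_radius; apply: bigmax_ge_id.
Qed.
End S.

Local Close Scope complex_scope.

Theorem theorem5p5 (R : realType) (n : nat) (E : rel 'I_n) :
  irreflexive E ->
  (forall k : nat, spectral_radius (Hk R k E) <= (max_deg E)%:R) /\
  (weakly_connected E ->
   forall k : nat,
     spectral_radius (Hk R k E) = (max_deg E)%:R <->
     und_regular E (max_deg E) /\
     exists f : 'I_n -> 'I_(2 * k.+1),
       structureA k E f \/ structureB k E f).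
Proof.
move=> irr; split.
  by move=> k; exact: (@rho_le R k n E irr).
move=> wc k; split; first exact: (@fwd R k n E irr wc).
by move=> [reg ex]; exact: (@bwd R k n E irr reg ex).
Qed.
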